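(* Let $B$ be an $n\times n$ matrix of non-negative integers whose last $n-m$ rows are zero. Suppose that $J_{nm}+B$ is irreducible and that its top-left $m\times m$ corner is irreducible. Suppose $B'$ is formed from $B$ in one of two ways: - by adding some column of $B$ to a different column; or - by adding some non-zero row of $B$ to a different non-zero row. Then $J_{nm}+B\sim_M J_{nm}+B'$.
   Context: $J_{nm}$ ($0\le m\le n$) is the $n\times n$ matrix whose $i$-th row, for $i\le m$, has a $1$ in position $i$ and $0$ elsewhere, and whose last $n-m$ rows consist entirely of $\infty$. Arithmetic convention: $\infty+a=\infty$. For an $X\times X$ matrix $A$ with entries in $\{0,1,2,\dots\}\cup\{\infty\}$, $G_A$ is the graph with vertex set $X$ and exactly $A(x,y)$ edges from $x$ to $y$. A matrix $A$ is irreducible if $G_A$ is strongly connected. For matrices, $A\sim_M B$ means $G_A\sim_M G_B$. A graph may have multiple edges and loops. A source receives no edges, a sink emits no edges, and an infinite emitter emits infinitely many edges. A vertex is singular if it is a sink or infinite emitter, and regular otherwise. Move-equivalence $\sim_M$ is the smallest equivalence relation on graphs with finitely many vertices such that $G\sim_M E$ whenever $E$ is isomorphic to a graph obtained from $G$ by one of the following moves. (S) Delete a regular source together with the edges it emits. (R) For a regular vertex $u$ emitting exactly one edge $f$, with $r(f)\neq u$, and all of whose incoming edges have the same source $v$: delete $u$, $f$ and the edges into $u$, and add for each $e\in r^{-1}(u)$ an edge $[ef]$ from $v$ to $r(f)$. (O) Out-splitting at a non-sink $v$ along a partition $\mathcal E_1,\dots,\mathcal E_n$ of $s^{-1}(v)$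 with at most one infinite part. Replace $v$ by $v^1,\dots,v^n$. Each edge $e$ into $v$ becomes copies $e^1,\dots,e^n$ with $r(e^i)=v^i$ and source $s(e)$, or source $v^j$ if $s(e)=v$ and $e\in\mathcal E_j$. An edge from $v$ to $w\neq v$ lying in $\mathcal E_i$ gets source $v^i$. (I) In-splitting at a regular non-source $v$ along a partition $\mathcal E_1,\dots,\mathcal E_n$ of $r^{-1}(v)$. Replace $v$ by $v^1,\dots,v^n$. Each edge $e$ out of $v$ becomes copies $e^1,\dots,e^n$ with $s(e^i)=v^i$ and range $r(e)$, or range $v^j$ if $r(e)=v$ and $e\in\mathcal E_j$. An edge into $v$ from $w\neq v$ lying in $\mathcal E_i$ gets range $v^i$. *)

(* Defs.v *)
From HB Require Import structures.
From mathcomp Require Import all_boot all_algebra.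
From Stdlib Require Import Relations.Relation_Operators.
From Stdlib Require List.

Set Implicit Arguments.
Unset Strict Implicit.
Unset Printing Implicit Defensive.

(* A directed graph with finitely many vertices; edges form an arbitrary type,
   so multiple edges, loops and infinitely many edges are allowed. *)
Record graph := Graph { gV : finType; gE : Type; gs : gE -> gV; gr : gE -> gV }.

Section GraphDefs.
Variable G : graph.

Definition emits_finitely (v : gV G) : Prop :=
  exists l : seq (gE G), forall e, gs e = v -> List.In e l.
Definition is_sink (v : gV G) : Prop := forall e : gE G, gs e <> v.
Definition is_source (v : gV G) : Prop := forall e : gE G, gr e <> v.
Definition infinite_emitter (v : gV G) : Prop := ~ emits_finitely v.
Definition singular (v : gV G) : Prop := is_sink v \/ infinite_emitter v.
Definition regular (v : gV G) : Prop := ~ singular v.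

Definition Vdel (u : gV G) := {w : gV G | w != u}.
Definition Edel (u : gV G) := {e : gE G | (gs e != u) && (gr e != u)}.

Lemma Edel_s (u : gV G) (e : Edel u) : gs (sval e) != u.
Proof. by case/andP: (svalP e). Qed.
Lemma Edel_r (u : gV G) (e : Edel u) : gr (sval e) != u.
Proof. by case/andP: (svalP e). Qed.

Definition del_s (u : gV G) (e : Edel u) : Vdel u := exist _ (gs (sval e)) (Edel_s e).
Definition del_r (u : gV G) (e : Edel u) : Vdel u := exist _ (gr (sval e)) (Edel_r e).

Definition graphS (u : gV G) : graph := @Graph (Vdel u : finType) (Edel u) (@del_s u) (@del_r u).

Definition moveS (H : graph) : Prop :=
  exists u : gV G, regular u /\ is_source u /\ H = graphS u.

Definition ER (u : gV G) := (Edel u + {e : gE G | gr e == u})%type.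
Definition graphR (u v : gV G) (f : gE G) (hv : v != u) (hf : gr f != u) : graph :=
  @Graph (Vdel u : finType) (ER u)
    (fun x => match x with inl e => del_s e | inr _ => exist _ v hv end)
    (fun x => match x with inl e => del_r e | inr _ => exist _ (gr f) hf end).

Definition moveR (H : graph) : Prop :=
  exists (u v : gV G) (f : gE G) (hv : v != u) (hf : gr f != u),
    regular u /\ gs f = u /\ (forall e, gs e = u -> e = f) /\
    (forall e, gr e = u -> gs e = v) /\ H = graphR hv hf.

(* splitting: vertex v replaced by copies indexed by 'I_k *)
Definition Vsplit (v : gV G) (k : nat) := (Vdel v + 'I_k)%type.
Definition lift_v (v : gV G) (k : nat) (w : gV G) (i : 'I_k) : Vsplit v k :=
  match (insub w : option (Vdel v)) with Some w' => inl w' | None => inr i end.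

Definition part_finite (P : gE G -> Prop) (k : nat) (p : gE G -> 'I_k) (i : 'I_k) : Prop :=
  exists l : seq (gE G), forall e, P e -> p e = i -> List.In e l.

Definition EO (v : gV G) (k : nat) :=
  ({e : gE G | gr e != v} + ({e : gE G | gr e == v} * 'I_k))%type.
Definition graphO (v : gV G) (k : nat) (p : gE G -> 'I_k) : graph :=
  @Graph (Vsplit v k : finType) (EO v k)
    (fun x => match x with
              | inl e => lift_v v (gs (sval e)) (p (sval e))
              | inr (e, _) => lift_v v (gs (sval e)) (p (sval e)) end)
    (fun x => match x with
              | inl e => inl (exist _ (gr (sval e)) (svalP e))
              | inr (_, i) => inr i end).

Definition moveO (H : graph) : Prop :=
  exists (v : gV G) (k : nat) (p : gE G -> 'I_k),
    ~ is_sink v /\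
    (forall i : 'I_k, exists e, gs e = v /\ p e = i) /\
    (forall i j : 'I_k, i != j ->
        part_finite (fun e => gs e = v) p i \/ part_finite (fun e => gs e = v) p j) /\
    H = graphO v p.

Definition EI (v : gV G) (k : nat) :=
  ({e : gE G | gs e != v} + ({e : gE G | gs e == v} * 'I_k))%type.
Definition graphI (v : gV G) (k : nat) (p : gE G -> 'I_k) : graph :=
  @Graph (Vsplit v k : finType) (EI v k)
    (fun x => match x with
              | inl e => inl (exist _ (gs (sval e)) (svalP e))
              | inr (_, i) => inr i end)
    (fun x => match x with
              | inl e => lift_v v (gr (sval e)) (p (sval e))
              | inr (e, _) => lift_v v (gr (sval e)) (p (sval e)) end).

Definition moveI (H : graph) : Prop :=
  exists (v : gV G) (k : nat) (p : gE G -> 'I_k),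
    regular v /\ ~ is_source v /\
    (forall i : 'I_k, exists e, gr e = v /\ p e = i) /\
    H = graphI v p.

Definition reach (x y : gV G) : Prop :=
  clos_refl_trans (gV G) (fun a b => exists e : gE G, gs e = a /\ gr e = b) x y.
Definition strongly_connected : Prop := forall x y : gV G, reach x y.

End GraphDefs.

Definition graph_iso (G H : graph) : Prop :=
  exists (fV : gV G -> gV H) (fE : gE G -> gE H),
    bijective fV /\ bijective fE /\
    (forall e, gs (fE e) = fV (gs e)) /\ (forall e, gr (fE e) = fV (gr e)).

Definition move (G H : graph) : Prop := moveS G H \/ moveR G H \/ moveO G H \/ moveI G H.

Definition move_step (G E : graph) : Prop := exists K, move G K /\ graph_iso K E.

Definition move_equiv (G E : graph) : Prop := clos_refl_sym_trans graph move_step G E.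

(* matrices over {0,1,2,...} ∪ {∞}; None stands for ∞ *)
Definition ninf := option nat.
Definition addinf (a b : ninf) : ninf :=
  match a, b with Some x, Some y => Some (x + y)%N | _, _ => None end.
Definition mxaddinf n (A B : 'M[ninf]_n) : 'M[ninf]_n := map2_mx addinf A B.
Definition mxinf n (B : 'M[nat]_n) : 'M[ninf]_n := map_mx Some B.

(* J_{nm}, 0-indexed: row i < m has a 1 at position i, rows i >= m are all ∞ *)
Definition J_nm (n m : nat) : 'M[ninf]_n :=
  \matrix_(i, j) (if (i < m)%N then Some (nat_of_bool (i == j)) else None).

Definition edge_ok n (A : 'M[ninf]_n) (t : 'I_n * 'I_n * nat) : bool :=
  match A t.1.1 t.1.2 with Some c => (t.2 < c)%N | None => true end.

(* the graph G_A: exactly A(x,y) edges from x to y *)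
Definition mgraph n (A : 'M[ninf]_n) : graph :=
  @Graph 'I_n {t : 'I_n * 'I_n * nat | edge_ok A t}
    (fun t => (sval t).1.1) (fun t => (sval t).1.2).

Definition irreducible n (A : 'M[ninf]_n) : Prop := strongly_connected (mgraph A).

Definition mx_move_equiv n k (A : 'M[ninf]_n) (B : 'M[ninf]_k) : Prop :=
  move_equiv (mgraph A) (mgraph B).

Definition topleft (T : Type) n m (hmn : (m <= n)%N) (A : 'M[T]_n) : 'M[T]_m :=
  \matrix_(i, j) A (widen_ord hmn i) (widen_ord hmn j).

(* Main.v *)
Require Import Defs.
From HB Require Import structures.
From mathcomp Require Import all_boot all_algebra.
From Stdlib Require Import Relations.Relation_Operators Relations.Operators_Properties ClassicalEpsilon FunctionalExtensionality.
From Stdlib Require List.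
From mathcomp Require Import zify.
From Stdlib Require Import Lia.
Set Implicit Arguments. Unset Strict Implicit. Unset Printing Implicit Defensive.


Definition Equiv (A B : Type) : Prop := exists f : A -> B, bijective f.

Lemma bij_is (A B : Type) (f : A -> B) : injective f -> (forall y, exists x, f x = y) -> bijective f.
Proof.
move=> inj sur.
pose g y := proj1_sig (constructive_indefinite_description _ (sur y)).
exists g => [x|y]; rewrite /g; case: constructive_indefinite_description => //= x' H.
by apply: inj.
Qed.

Lemma Equiv_is (A B : Type) (f : A -> B) : injective f -> (forall y, exists x, f x = y) -> Equiv A B.
Proof. by move=> ??; exists f; apply: bij_is. Qed.

Lemma Equiv_refl A : Equiv A A. Proof. by exists id; exists id. Qed.
Lemma Equiv_sym A B : Equiv A B -> Equiv B A.
Proof. by case=> f [g fg gf]; exists g; exists f. Qed.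
Lemma Equiv_trans A B C : Equiv A B -> Equiv B C -> Equiv A C.
Proof. by case=> f bf [g bg]; exists (g \o f); apply: bij_comp. Qed.

Lemma Equiv_sum A B A' B' : Equiv A A' -> Equiv B B' -> Equiv (A + B) (A' + B').
Proof.
case=> f [f' ff' f'f] [g [g' gg' g'g]].
exists (fun x => match x with inl a => inl (f a) | inr b => inr (g b) end).
exists (fun x => match x with inl a => inl (f' a) | inr b => inr (g' b) end).
  by case=> x; rewrite ?ff' ?gg'.
by case=> x; rewrite ?f'f ?g'g.
Qed.

Lemma Equiv_sumC A B : Equiv (A + B) (B + A).
Proof.
exists (fun x => match x with inl a => inr a | inr b => inl b end).
by exists (fun x => match x with inl a => inr a | inr b => inl b end); case.
Qed.

Definition Card (c : ninf) : Type := match c with Some k => 'I_k | None => nat end.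
Definition HasCard T c := Equiv T (Card c).

Lemma HasCard_Equiv T T' c : Equiv T T' -> HasCard T' c -> HasCard T c.
Proof. exact: Equiv_trans. Qed.

Lemma Card_sum a b : Equiv (Card a + Card b) (Card (addinf a b)).
Proof.
case: a => [a|]; case: b => [b|] /=.
- by exists unsplit; exists split; [apply: unsplitK| apply: splitK].
- apply: (@Equiv_is _ _ (fun x => match x with inl i => nat_of_ord i | inr k => a + k end)).
    case=> [i|k] [j|l] //=.
    + by move/val_inj=> ->.
    + by move=> E; have := ltn_ord i; rewrite E ltnNge leq_addr.
    + by move=> E; have := ltn_ord j; rewrite -E ltnNge leq_addr.
    + by move/eqP; rewrite eqn_add2l => /eqP ->.
  move=> y; case: (ltnP y a) => H.
    by exists (inl (Ordinal H)).
  by exists (inr (y - a)); rewrite subnKC.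
- apply: (@Equiv_is _ _ (fun x => match x with inr i => nat_of_ord i | inl k => b + k end)).
    case=> [i|k] [j|l] //=.
    + by move/eqP; rewrite eqn_add2l => /eqP ->.
    + by move=> E; have := ltn_ord l; rewrite -E ltnNge leq_addr.
    + by move=> E; have := ltn_ord k; rewrite E ltnNge leq_addr.
    + by move/val_inj=> ->.
  move=> y; case: (ltnP y b) => H.
    by exists (inr (Ordinal H)).
  by exists (inl (y - b)); rewrite subnKC.
- apply: (@Equiv_is _ _ (fun x => match x with inl k => k.*2 | inr k => k.*2.+1 end)).
    case=> [i|k] [j|l] //=.
    + by move/double_inj ->.
    + by move=> E; have := f_equal odd E; rewrite /= !odd_double.
    + by move=> E; have := f_equal odd E; rewrite /= !odd_double.
    + by case=> /double_inj ->.
  move=> y; have E := odd_double_half y; case Ho: (odd y) E => /= E.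
    by exists (inr y./2); rewrite -{2}E add1n.
  by exists (inl y./2); rewrite -{2}E add0n.
Qed.

Lemma HasCard_sum A B a b : HasCard A a -> HasCard B b -> HasCard (A + B) (addinf a b).
Proof. by move=> ha hb; apply: Equiv_trans (Equiv_sum ha hb) (Card_sum a b). Qed.

Lemma HasCard_empty T : (T -> False) -> HasCard T (Some 0).
Proof.
move=> H; exists (fun x => match H x with end).
have F : 'I_0 -> T by case.
by exists F; [move=> x; case: (H x)|case].
Qed.

Lemma HasCard_one T (x : T) : (forall y, y = x) -> HasCard T (Some 1).
Proof.
move=> H; exists (fun _ => ord0); exists (fun _ => x); first by move=> y; rewrite (H y).
by case=> [[]] // ?; apply/val_inj.
Qed.

Definition okc (c : ninf) (k : nat) : bool := match c with Some c => k < c | None => true end.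

Lemma HasCard_okc c : HasCard {k : nat | okc c k} c.
Proof.
case: c => [c|] /=.
  apply: (@Equiv_is _ _ (fun x : {k | k < c} => Ordinal (svalP x))).
    by move=> [x hx] [y hy] /= [E]; subst; congr exist; apply: bool_irrelevance.
  by move=> y; exists (exist _ (val y) (ltn_ord y)); apply/val_inj.
apply: (@Equiv_is _ _ (fun x : {k | true} => sval x)).
  by move=> [x hx] [y hy] /= E; subst; congr exist; apply: bool_irrelevance.
by move=> y; exists (exist _ y isT).
Qed.

Definition predinf (c : ninf) : ninf := match c with Some c => Some c.-1 | None => None end.

Lemma HasCard_okc1 c : HasCard {k : nat | okc c k && (k != 0)} (predinf c).
Proof.
apply: HasCard_Equiv (HasCard_okc (predinf c)).
have H : forall k, okc c k && (k != 0) -> okc (predinf c) k.-1.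
  by case: c => [c|] /= [|k] //=; rewrite ?andbT //; lia.
apply: (@Equiv_is _ _ (fun x => exist _ (sval x).-1 (H _ (svalP x)))).
  move=> [x hx] [y hy] /= [E]; have: x = y.
    by case/andP: hx => _ /eqP hx; case/andP: hy => _ /eqP hy; lia.
  by move=> ?; subst; congr exist; apply: bool_irrelevance.
move=> [y hy]; have hy' : okc c y.+1 && (y.+1 != 0).
  by case: c hy H => [c|] //= hy _; rewrite ?andbT //; lia.
by exists (exist _ y.+1 hy'); congr exist; apply: bool_irrelevance.
Qed.

Lemma HasCard_sub_all T (P : T -> bool) c : (forall x, P x) -> HasCard T c -> HasCard {x | P x} c.
Proof.
move=> H; apply: HasCard_Equiv.
apply: (@Equiv_is _ _ (fun x => sval x)).
  by move=> [x hx] [y hy] /= E; subst; congr exist; apply: bool_irrelevance.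
by move=> y; exists (exist _ y (H y)).
Qed.

Lemma HasCard_sub_none T (P : T -> bool) : (forall x, ~~ P x) -> HasCard {x | P x} (Some 0).
Proof. by move=> H; apply: HasCard_empty => [[x hx]]; have := H x; rewrite hx. Qed.


Definition fiber (G : graph) (x y : gV G) := {e : gE G | (gs e == x) && (gr e == y)}.
Arguments fiber : clear implicits.

Definition gmgraph (W : finType) (A : W -> W -> ninf) : graph :=
  @Graph W {t : W * W * nat | okc (A t.1.1 t.1.2) t.2} (fun t => (sval t).1.1) (fun t => (sval t).1.2).

Lemma Equiv_fib (A B : Type) (Q : B -> bool) (f : A -> B) :
  injective f -> (forall a, Q (f a)) -> (forall b, Q b -> exists a, f a = b) -> Equiv A {b | Q b}.
Proof.
move=> inj hQ sur.
apply: (@Equiv_is _ _ (fun a => exist _ (f a) (hQ a))).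
  by move=> x y [/inj].
move=> [b hb]; case: (sur b hb) => a E; exists a; subst; congr exist; apply: bool_irrelevance.
Qed.

Lemma fiber_gm (W : finType) (A : W -> W -> ninf) x y : HasCard (fiber (gmgraph A) x y) (A x y).
Proof.
apply: HasCard_Equiv (HasCard_okc (A x y)); apply: Equiv_sym.
have H : forall k, okc (A x y) k -> okc (A (x, y, k).1.1 (x, y, k).1.2) (x, y, k).2 by [].
apply: (@Equiv_fib _ _ _ (fun k : {k | okc (A x y) k} => (exist _ (x, y, sval k) (H _ (svalP k)) : gE (gmgraph A)))).
- move=> [k hk] [l hl] [E]; subst; congr exist; apply: bool_irrelevance.
- by move=> [k hk] /=; rewrite !eqxx.
- move=> [[[a b] k] h] /= /andP [/eqP ea /eqP eb]; subst.
  by exists (exist _ k h); congr exist; apply: bool_irrelevance.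
Qed.

Section CountIso.
Variables (H : graph) (W : finType) (A : W -> W -> ninf) (fV : gV H -> W).
Hypothesis bfV : bijective fV.
Hypothesis hc : forall x y, HasCard (fiber H x y) (A (fV x) (fV y)).

Let K := gmgraph A.

Lemma ceq x y : Equiv (fiber H x y) (fiber K (fV x) (fV y)).
Proof. have h1 := hc x y. have h2 := Equiv_sym (@fiber_gm W A (fV x) (fV y)). exact: (Equiv_trans h1 h2). Qed.

Let phi x y : fiber H x y -> fiber K (fV x) (fV y) :=
  proj1_sig (constructive_indefinite_description _ (ceq x y)).
Let phib x y : bijective (@phi x y) :=
  proj2_sig (constructive_indefinite_description _ (ceq x y)).

Let pf (e : gE H) : (gs e == gs e) && (gr e == gr e) := introT andP (conj (eqxx _) (eqxx _)).

Let fE (e : gE H) : gE K := sval (phi (exist _ e (pf e))).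

Lemma fE_spec e x y (h : (gs e == x) && (gr e == y)) : fE e = sval (phi (exist _ e h)).
Proof.
have /andP [/eqP ex /eqP ey] := h; subst.
by rewrite /fE; congr (sval (phi (exist _ e _))); apply: bool_irrelevance.
Qed.

Lemma fiber_prop x y (z : fiber K (fV x) (fV y)) : gs (sval z) = fV x /\ gr (sval z) = fV y.
Proof. by case: z => z /= /andP [/eqP -> /eqP ->]. Qed.

Lemma count_iso : graph_iso H K.
Proof.
have gsE : forall e, gs (fE e) = fV (gs e) by move=> e; case: (fiber_prop (phi (exist _ e (pf e)))).
have grE : forall e, gr (fE e) = fV (gr e) by move=> e; case: (fiber_prop (phi (exist _ e (pf e)))).
exists fV, fE; split => //; split => //.
apply: bij_is.
  move=> e1 e2 E.
  have E1 : gs e1 = gs e2 by apply: (bij_inj bfV); rewrite -!gsE E.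
  have E2 : gr e1 = gr e2 by apply: (bij_inj bfV); rewrite -!grE E.
  have h2 : (gs e2 == gs e1) && (gr e2 == gr e1) by rewrite E1 E2 !eqxx.
  move: E; rewrite (fE_spec h2) /fE => /val_inj /(bij_inj (phib _ _)) [].
  done.
move=> e'.
case: bfV => g fg gf.
have h : (gs e' == fV (g (gs e'))) && (gr e' == fV (g (gr e'))) by rewrite !gf !eqxx.
case: (phib (g (gs e')) (g (gr e'))) => ph1 c1 c2.
set a := ph1 (exist _ e' h).
exists (sval a).
have ha := svalP a.
rewrite (fE_spec ha).
have -> : exist _ (sval a) ha = a by case: (a) ha => ?? ?; congr exist; apply: bool_irrelevance.
by rewrite /a c2.
Qed.
End CountIso.

Definition me := move_equiv.
Lemma me_refl G : me G G. Proof. exact: rst_refl. Qed.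
Lemma me_sym G H : me G H -> me H G. Proof. exact: rst_sym. Qed.
Lemma me_trans G H K : me G H -> me H K -> me G K. Proof. exact: rst_trans. Qed.
Lemma me_step G K H : move G K -> graph_iso K H -> me G H.
Proof. by move=> m i; apply: rst_step; exists K. Qed.


Lemma inl_eq (A B : eqType) (x y : A) : (@inl A B x == inl y) = (x == y). Proof. by []. Qed.
Lemma inr_eq (A B : eqType) (x y : B) : (@inr A B x == inr y) = (x == y). Proof. by []. Qed.
Lemma inl_inr (A B : eqType) (x : A) (y : B) : (inl x == inr y) = false. Proof. by []. Qed.
Lemma inr_inl (A B : eqType) (x : A) (y : B) : (inr y == inl x) = false. Proof. by []. Qed.
Lemma sig_eq (T : eqType) (P : pred T) (x y : {z | P z}) : (x == y) = (sval x == sval y). Proof. by []. Qed.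
Lemma pair_eq (A B : eqType) (a a' : A) (b b' : B) : ((a,b) == (a',b')) = (a == a') && (b == b'). Proof. by []. Qed.
Definition eqs := (inl_eq, inr_eq, inl_inr, inr_inl, sig_eq, pair_eq).

Lemma exist2_eq (T : Type) (P : T -> bool) (Q : {x | P x} -> bool) x h1 h2 q1 q2 :
  exist Q (exist P x h1) q1 = exist Q (exist P x h2) q2.
Proof. have E := bool_irrelevance h1 h2; subst; congr exist; apply: bool_irrelevance. Qed.

Section LiftV.
Variables (G : graph) (v : gV G) (k : nat).
Lemma lift_v_inl w i (a : Vdel v) : (lift_v v w i == inl a :> Vsplit v k) = (w == sval a).
Proof.
rewrite /lift_v; case: insubP => [w' hw ew|hw] /=; first by rewrite inl_eq sig_eq ew.
rewrite inr_inl; apply/esym/negbTE; apply: contraNN hw => /eqP ->; exact: (svalP a).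
Qed.
Lemma lift_v_inr w i (j : 'I_k) : (lift_v v w i == inr j :> Vsplit v k) = (w == v) && (i == j).
Proof.
rewrite /lift_v; case: insubP => [w' hw ew|hw] /=; first by rewrite inl_inr (negbTE hw).
by move/negPn: hw => ->; rewrite inr_eq.
Qed.
End LiftV.
Definition lifts := (lift_v_inl, lift_v_inr).

Section FibO.
Variables (G : graph) (v : gV G) (k : nat) (p : gE G -> 'I_k).
Let O := graphO v p.

Lemma fibO1 a b : Equiv (fiber O (inl a) (inl b)) (fiber G (sval a) (sval b)).
Proof.
apply: Equiv_sym.
have H1 : forall e : fiber G (sval a) (sval b), gr (sval e) != v.
  by move=> [e /andP [_ /eqP ->]]; exact: (svalP b).
apply: (@Equiv_fib _ _ _ (fun e => (inl (exist _ (sval e) (H1 e)) : gE O))).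
- by move=> [x hx] [y hy] [E]; subst; congr exist; apply: bool_irrelevance.
- by move=> [e he] /=; rewrite lifts !eqs.
- case=> [e|[e i]] /=; rewrite ?lifts ?eqs ?andbF //.
  move=> h; exists (exist _ (sval e) h); congr inl; exact: val_inj.
Qed.

Lemma fibO2 i b : Equiv (fiber O (inr i) (inl b)) {e : fiber G v (sval b) | p (sval e) == i}.
Proof.
apply: Equiv_sym.
have H1 : forall e : {e : fiber G v (sval b) | p (sval e) == i}, gr (sval (sval e)) != v.
  by move=> [[e he] ?] /=; move/andP: (he) => [_ /eqP ->]; exact: (svalP b).
apply: (@Equiv_fib _ _ _ (fun e => (inl (exist _ (sval (sval e)) (H1 e)) : gE O))).
- by move=> [[x hx] px] [[y hy] py] [E]; subst; apply: exist2_eq.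
- by move=> [[e h] he] /=; move/andP: (h) => [/eqP he1 /eqP he2]; rewrite lifts !eqs /= ?he1 ?he2 he !eqxx.
- case=> [e|[e j]] /=; rewrite ?lifts ?eqs ?andbF //.
  case/andP=> /andP [h1 h2] h3.
  have hf : (gs (sval e) == v) && (gr (sval e) == sval b) by rewrite h1 h3.
  exists (exist _ (exist _ (sval e) hf) h2); congr inl; exact: val_inj.
Qed.

Lemma fibO3 a i : Equiv (fiber O (inl a) (inr i)) (fiber G (sval a) v).
Proof.
apply: Equiv_sym.
have H1 : forall e : fiber G (sval a) v, gr (sval e) == v.
  by move=> [e /andP [_ /eqP ->]].
apply: (@Equiv_fib _ _ _ (fun e => (inr (exist _ (sval e) (H1 e), i) : gE O))).
- by move=> [x hx] [y hy] [E]; subst; congr exist; apply: bool_irrelevance.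
- by move=> [e he] /=; rewrite lifts !eqs; case/andP: he => -> _; rewrite eqxx.
- case=> [e|[e j]] /=; rewrite ?lifts ?eqs ?andbF //.
  case/andP=> h1 /eqP h2; subst j.
  have hf : (gs (sval e) == sval a) && (gr (sval e) == v) by rewrite h1 (svalP e).
  exists (exist _ (sval e) hf); congr (inr (_, _)); exact: val_inj.
Qed.

Lemma fibO4 i j : Equiv (fiber O (inr i) (inr j)) {e : fiber G v v | p (sval e) == i}.
Proof.
apply: Equiv_sym.
have H1 : forall e : {e : fiber G v v | p (sval e) == i}, gr (sval (sval e)) == v.
  by move=> [[e he] ?] /=; move/andP: (he) => [_ /eqP ->].
apply: (@Equiv_fib _ _ _ (fun e => (inr (exist _ (sval (sval e)) (H1 e), j) : gE O))).
- by move=> [[x hx] px] [[y hy] py] [E]; subst; apply: exist2_eq.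
- by move=> [[e h] he] /=; move/andP: (h) => [/eqP he1 /eqP he2]; rewrite lifts !eqs /= ?he1 he !eqxx.
- case=> [e|[e j']] /=; rewrite ?lifts ?eqs ?andbF //.
  case/andP=> /andP [h1 h2] /eqP h3; subst j'.
  have hf : (gs (sval e) == v) && (gr (sval e) == v) by rewrite h1 (svalP e).
  exists (exist _ (exist _ (sval e) hf) h2); congr (inr (_, _)); exact: val_inj.
Qed.
End FibO.

Section FibI.
Variables (G : graph) (v : gV G) (k : nat) (p : gE G -> 'I_k).
Let I := graphI v p.

Lemma fibI1 a b : Equiv (fiber I (inl a) (inl b)) (fiber G (sval a) (sval b)).
Proof.
apply: Equiv_sym.
have H1 : forall e : fiber G (sval a) (sval b), gs (sval e) != v.
  by move=> [e /andP [/eqP -> _]]; exact: (svalP a).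
apply: (@Equiv_fib _ _ _ (fun e => (inl (exist _ (sval e) (H1 e)) : gE I))).
- by move=> [x hx] [y hy] [E]; subst; congr exist; apply: bool_irrelevance.
- by move=> [e he] /=; rewrite lifts !eqs.
- case=> [e|[e i]] /=; rewrite ?lifts ?eqs //.
  move=> h; exists (exist _ (sval e) h); congr inl; exact: val_inj.
Qed.

Lemma fibI2 a j : Equiv (fiber I (inl a) (inr j)) {e : fiber G (sval a) v | p (sval e) == j}.
Proof.
apply: Equiv_sym.
have H1 : forall e : {e : fiber G (sval a) v | p (sval e) == j}, gs (sval (sval e)) != v.
  by move=> [[e he] ?] /=; move/andP: (he) => [/eqP -> _]; exact: (svalP a).
apply: (@Equiv_fib _ _ _ (fun e => (inl (exist _ (sval (sval e)) (H1 e)) : gE I))).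
- by move=> [[x hx] px] [[y hy] py] [E]; subst; apply: exist2_eq.
- by move=> [[e h] he] /=; move/andP: (h) => [/eqP he1 /eqP he2]; rewrite lifts !eqs /= ?he1 ?he2 he !eqxx.
- case=> [e|[e i]] /=; rewrite ?lifts ?eqs //.
  case/andP=> h1 /andP [h2 h3].
  have hf : (gs (sval e) == sval a) && (gr (sval e) == v) by rewrite h1 h2.
  exists (exist _ (exist _ (sval e) hf) h3); congr inl; exact: val_inj.
Qed.

Lemma fibI3 i b : Equiv (fiber I (inr i) (inl b)) (fiber G v (sval b)).
Proof.
apply: Equiv_sym.
have H1 : forall e : fiber G v (sval b), gs (sval e) == v.
  by move=> [e /andP [/eqP -> _]].
apply: (@Equiv_fib _ _ _ (fun e => (inr (exist _ (sval e) (H1 e), i) : gE I))).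
- by move=> [x hx] [y hy] [E]; subst; congr exist; apply: bool_irrelevance.
- by move=> [e he] /=; rewrite lifts !eqs; case/andP: he => _ ->; rewrite eqxx.
- case=> [e|[e j]] /=; rewrite ?lifts ?eqs //.
  case/andP=> /eqP h2 h1; subst j.
  have hf : (gs (sval e) == v) && (gr (sval e) == sval b) by rewrite h1 (svalP e).
  exists (exist _ (sval e) hf); congr (inr (_, _)); exact: val_inj.
Qed.

Lemma fibI4 i j : Equiv (fiber I (inr i) (inr j)) {e : fiber G v v | p (sval e) == j}.
Proof.
apply: Equiv_sym.
have H1 : forall e : {e : fiber G v v | p (sval e) == j}, gs (sval (sval e)) == v.
  by move=> [[e he] ?] /=; move/andP: (he) => [/eqP -> _].
apply: (@Equiv_fib _ _ _ (fun e => (inr (exist _ (sval (sval e)) (H1 e), i) : gE I))).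
- by move=> [[x hx] px] [[y hy] py] [E]; subst; apply: exist2_eq.
- by move=> [[e h] he] /=; move/andP: (h) => [/eqP he1 /eqP he2]; rewrite lifts !eqs /= he2 he !eqxx.
- case=> [e|[e i']] /=; rewrite ?lifts ?eqs //.
  case/andP=> /eqP h3 /andP [h1 h2]; subst i'.
  have hf : (gs (sval e) == v) && (gr (sval e) == v) by rewrite h1 (svalP e).
  exists (exist _ (exist _ (sval e) hf) h2); congr (inr (_, _)); exact: val_inj.
Qed.
End FibI.


Section FibR.
Variables (G : graph) (u v : gV G) (f : gE G) (hv : v != u) (hf : gr f != u).
Let R := graphR hv hf.

Lemma fibR a b : Equiv (fiber R a b)
  (fiber G (sval a) (sval b) + {e : gE G | (gr e == u) && ((v == sval a) && (gr f == sval b))}).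
Proof.
apply: Equiv_sym.
have H1 : forall e : fiber G (sval a) (sval b), (gs (sval e) != u) && (gr (sval e) != u).
  move=> e; have /andP [/eqP E1 /eqP E2] := svalP e; rewrite E1 E2 (svalP a) (svalP b) //.
have H2 : forall e : {e : gE G | (gr e == u) && ((v == sval a) && (gr f == sval b))}, gr (sval e) == u.
  by move=> e; case/andP: (svalP e).
apply: (@Equiv_fib _ _ _ (fun x => match x with inl e => (inl (exist _ (sval e) (H1 e)) : gE R)
                                  | inr e => inr (exist _ (sval e) (H2 e)) end)).
- case=> [[x hx]|[x hx]] [[y hy]|[y hy]] //= [E]; subst; f_equal; f_equal; apply: bool_irrelevance.
- case=> [[e h]|[e h]] /=; rewrite !eqs /=; first by rewrite h.
  by case/andP: h => _ /andP [-> ->].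
- case=> [e|e] /=; rewrite !eqs /=.
  + move=> h; exists (inl (exist _ (sval e) h)); congr inl; exact: val_inj.
  + move=> h; exists (inr (exist _ (sval e) (introT andP (conj (svalP e) h)))); congr inr; exact: val_inj.
Qed.

Lemma cardR2 (n : ninf) (c : bool) : (forall e, gr e = u -> gs e = v) -> HasCard (fiber G v u) n ->
  HasCard {e : gE G | (gr e == u) && c} (if c then n else Some 0).
Proof.
move=> Hin hn; case: c; last by apply: HasCard_sub_none => e; rewrite andbF.
apply: HasCard_Equiv hn; apply: Equiv_sym.
apply: (@Equiv_fib _ _ _ (fun e : fiber G v u => sval e)).
- by move=> [x hx] [y hy] /= E; subst; congr exist; apply: bool_irrelevance.
- by move=> e; case/andP: (svalP e) => _ ->.
- move=> e /andP [h _]; have h2 : (gs e == v) && (gr e == u) by rewrite h (Hin e (eqP h)) eqxx.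
  by exists (exist _ e h2).
Qed.
End FibR.

Lemma Equiv_sub_ext (T : Type) (P Q : T -> bool) : (forall x, P x = Q x) -> Equiv {x | P x} {x | Q x}.
Proof.
move=> H; apply: (@Equiv_fib _ _ _ (fun x : {x | P x} => sval x)).
- by move=> [x hx] [y hy] /= E; subst; congr exist; apply: bool_irrelevance.
- by move=> [x hx] /=; rewrite -H.
- by move=> x hx; exists (exist _ x (etrans (H x) hx)).
Qed.

Section GM.
Variables (V : finType) (A : V -> V -> ninf).
Let G := gmgraph A.
Definition mkE (t : V * V * nat) (h : okc (A t.1.1 t.1.2) t.2) : gE G :=
  exist (fun t : V * V * nat => okc (A t.1.1 t.1.2) t.2) t h.

Lemma fiber_gm_sub x y (Q : nat -> bool) :
  Equiv {e : fiber G x y | Q (sval (sval e)).2} {k : nat | okc (A x y) k && Q k}.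
Proof.
apply: Equiv_sym.
have H1 : forall k : {k : nat | okc (A x y) k && Q k}, okc (A (x,y,sval k).1.1 (x,y,sval k).1.2) (x,y,sval k).2.
  by move=> k; case/andP: (svalP k).
have H2 : forall k : {k : nat | okc (A x y) k && Q k}, (gs (mkE (H1 k)) == x) && (gr (mkE (H1 k)) == y).
  by move=> k /=; rewrite !eqxx.
apply: (@Equiv_fib _ _ _ (fun k => exist _ (mkE (H1 k)) (H2 k) : fiber G x y)).
- by move=> [k hk] [l hl] [E]; subst; congr exist; apply: bool_irrelevance.
- by move=> k; case/andP: (svalP k).
- move=> [[[[a b] k] h] hab] /= hq; move/andP: (hab) => [/eqP ea /eqP eb]; subst.
  have hk : okc (A a b) k && Q k by rewrite h hq.
  by exists (exist _ k hk); apply: val_inj; apply: val_inj.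
Qed.

Lemma fiber_gm_prop x y (e : fiber G x y) : sval (sval e) = (x, y, (sval (sval e)).2).
Proof. by case: e => [[[[a b] k] h] /= /andP [/eqP -> /eqP ->]]. Qed.

Lemma okc_true c : HasCard {k | okc c k && true} c.
Proof. apply: HasCard_Equiv (HasCard_okc c); apply: Equiv_sub_ext => k; exact: andbT. Qed.
Lemma okc_false c : HasCard {k | okc c k && false} (Some 0).
Proof. by apply: HasCard_sub_none => k; rewrite andbF. Qed.
Lemma okc_zero c : c <> Some 0 -> HasCard {k | okc c k && (k == 0)} (Some 1).
Proof.
move=> hc; have h0 : okc c 0 && (0 == 0) by case: c hc => [[|c]|] //.
pose x0 : {k | okc c k && (k == 0)} := exist _ 0 h0.
apply: (@HasCard_one _ x0) => -[k hk].
by move/andP: (hk) => [_ /eqP E]; subst; congr exist; apply: bool_irrelevance.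
Qed.
Lemma okc_nz c : HasCard {k | okc c k && (k != 0)} (predinf c).
Proof. exact: HasCard_okc1. Qed.
End GM.

Definition o0 : 'I_2 := ord0.
Definition o1 : 'I_2 := ord_max.
Lemma I2_cases (i : 'I_2) : i = o0 \/ i = o1.
Proof. case: i => [[|[|?]] h] //; [left|right]; exact: val_inj. Qed.
Lemma o01 : (o0 == o1) = false. Proof. by []. Qed.
Lemma o10 : (o1 == o0) = false. Proof. by []. Qed.


Section GM2.
Variables (V : finType) (A : V -> V -> ninf).
Let G := gmgraph A.

Lemma sub_card x y (P : gE G -> bool) (Q : nat -> bool) c :
  (forall e : fiber G x y, P (sval e) = Q (sval (sval e)).2) ->
  HasCard {k | okc (A x y) k && Q k} c -> HasCard {e : fiber G x y | P (sval e)} c.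
Proof.
move=> H hc; apply: HasCard_Equiv hc.
apply: Equiv_trans (Equiv_sub_ext (Q := fun e : fiber G x y => Q (sval (sval e)).2) H) _.
exact: fiber_gm_sub.
Qed.

Lemma gm_edge x y : A x y <> Some 0 -> okc (A (x,y,0).1.1 (x,y,0).1.2) (x,y,0).2.
Proof. by case: (A x y) => [[|c]|]. Qed.

Lemma fibgm (e : gE G) : sval e = (gs e, gr e, (sval e).2).
Proof. by case: e => [[[a b] k] h]. Qed.
End GM2.

Section OSplit.
Variables (V : finType) (A : V -> V -> ninf) (v t : V).
Hypothesis hvt : t != v.
Hypothesis h0 : A v t <> Some 0.
Hypothesis hother : exists e : gE (gmgraph A), gs e = v /\ sval e != (v, t, 0).
Let G := gmgraph A.

Definition pone (e : gE G) : 'I_2 := if sval e == (v, t, 0) then o0 else o1.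

Definition AO (x y : @Vsplit G v 2) : ninf :=
  match x, y with
  | inl a, inl b => A (sval a) (sval b)
  | inr i, inl b => if i == o0 then Some (nat_of_bool (sval b == t))
                    else if sval b == t then predinf (A v t) else A v (sval b)
  | inl a, inr _ => A (sval a) v
  | inr i, inr _ => if i == o0 then Some 0 else A v v
  end.

Lemma osplit : me G (gmgraph AO).
Proof.
pose e0 := mkE (gm_edge h0).
apply: (@me_step _ (@graphO G v 2 pone)).
  right; right; left; exists v, 2, pone; split.
    by move=> H; apply: (H e0).
  split.
    move=> i; case: (I2_cases i) => ->.
      by exists e0; rewrite /pone /= eqxx.
    case: hother => e [he1 he2]; exists e; split => //.
    by rewrite /pone (negbTE he2).
  split => //.
  have P0 : part_finite (fun e : gE G => gs e = v) pone o0.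
    exists [:: e0] => e _; rewrite /pone; case: ifP => // /eqP E _; left.
    by apply: val_inj; rewrite /= E.
  move=> i j; case: (I2_cases i) => ->; case: (I2_cases j) => -> //; by [left|right].
apply: (@count_iso _ _ _ id); first by exists id.
case=> [a|i] [b|j] /=.
- exact: HasCard_Equiv (fibO1 _ _ _) (fiber_gm _ _).
- apply: HasCard_Equiv (fibO3 _ _ _) (fiber_gm _ _).
- apply: HasCard_Equiv (fibO2 _ _ _) _.
  have Hp : forall i (e : fiber G v (sval b)), (pone (sval e) == i) =
     ((if (sval b == t) && ((sval (sval e)).2 == 0) then o0 else o1) == i).
    move=> i' e; rewrite /pone (fiber_gm_prop e) !eqs eqxx /=; done.
  case: (I2_cases i) => ->; rewrite ?eqxx ?o10; move: (Hp o0) (Hp o1) => Hp0 Hp1; case: eqP => [Eb|Nb].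
  + apply: (sub_card (P := fun x => pone x == _) (Q := fun k => (if (sval b == t) && (k == 0) then o0 else o1) == o0) Hp0); rewrite Eb.
    apply: HasCard_Equiv (okc_zero h0); apply: Equiv_sub_ext => k /=; rewrite ?eqxx /=; by case: (k == 0).
  + apply: (sub_card (P := fun x => pone x == _) (Q := fun k => (if (sval b == t) && (k == 0) then o0 else o1) == o0) Hp0); apply: HasCard_Equiv (okc_false (A v (sval b))).
    by apply: Equiv_sub_ext => k /=; rewrite (introF eqP Nb) /= andbF.
  + apply: (sub_card (P := fun x => pone x == _) (Q := fun k => (if (sval b == t) && (k == 0) then o0 else o1) == o1) Hp1); rewrite Eb.
    apply: HasCard_Equiv (okc_nz (A v t)); apply: Equiv_sub_ext => k /=; rewrite ?eqxx /=; by case: (k == 0).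
  + apply: (sub_card (P := fun x => pone x == _) (Q := fun k => (if (sval b == t) && (k == 0) then o0 else o1) == o1) Hp1); apply: HasCard_Equiv (okc_true (A v (sval b))).
    by apply: Equiv_sub_ext => k /=; rewrite (introF eqP Nb) /= andbT.
- apply: (HasCard_Equiv (@fibO4 G v 2 pone i j)).

  have Hp : forall i (e : fiber G v v), (pone (sval e) == i) = (o1 == i).
    move=> i' e; rewrite /pone (fiber_gm_prop e) !eqs eqxx /= [v == t]eq_sym (negbTE hvt) /=; done.
  case: (I2_cases i) => -> /=.
    by apply: (sub_card (P := fun x => pone x == _) (Q := fun _ => o1 == o0) (Hp o0)); exact: okc_false.
  by apply: (sub_card (P := fun x => pone x == _) (Q := fun _ => o1 == o1) (Hp o1)); exact: okc_true.
Qed.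
End OSplit.

Section ISplit.
Variables (V : finType) (A : V -> V -> ninf) (v s : V) (Z : bool).
Hypothesis hsv : s != v.
Hypothesis h0 : A s v <> Some 0.
Let G := gmgraph A.
Hypothesis hreg : regular (G := G) v.
Definition pin (e : gE G) : 'I_2 := if (gs e == s) && (Z || ((sval e).2 == 0)) then o0 else o1.
Hypothesis hother : exists e : gE G, gr e = v /\ pin e = o1.

Definition AI (x y : @Vsplit G v 2) : ninf :=
  match x, y with
  | inl a, inl b => A (sval a) (sval b)
  | inl a, inr j => if sval a == s then
                      (if j == o0 then (if Z then A s v else Some 1) else (if Z then Some 0 else predinf (A s v)))
                    else (if j == o0 then Some 0 else A (sval a) v)
  | inr i, inl b => A v (sval b)
  | inr i, inr j => if j == o0 then Some 0 else A v v
  end.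

Lemma isplit : me G (gmgraph AI).
Proof.
pose e0 := mkE (gm_edge h0).
apply: (@me_step _ (@graphI G v 2 pin)).
  right; right; right; exists v, 2, pin; split => //.
  split; first by move=> H; apply: (H e0).
  split => //.
  move=> i; case: (I2_cases i) => ->.
    by exists e0; rewrite /pin /= eqxx orbT.
  exact: hother.
apply: (@count_iso _ _ _ id); first by exists id.
case=> [a|i] [b|j] /=.
- exact: HasCard_Equiv (fibI1 _ _ _) (fiber_gm _ _).
- apply: (HasCard_Equiv (@fibI2 G v 2 pin a j)).
  have Hp : forall j (e : fiber G (sval a) v), (pin (sval e) == j) =
     ((if (sval a == s) && (Z || ((sval (sval e)).2 == 0)) then o0 else o1) == j).
    move=> j' e; rewrite /pin /= (fiber_gm_prop e) /=. done.
  have Q0 := Hp o0; have Q1 := Hp o1.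
  case: (I2_cases j) => ->; rewrite ?eqxx ?o10.
    apply: (sub_card (P := fun x => pin x == _) (Q := fun k => (if (sval a == s) && (Z || (k == 0)) then o0 else o1) == o0) Q0).
    case: eqP => [Ea|Na]; last first.
      by apply: HasCard_Equiv (okc_false (A (sval a) v)); apply: Equiv_sub_ext => k /=; rewrite andbF.
    rewrite Ea; case: Z.
      by apply: HasCard_Equiv (okc_true (A s v)); apply: Equiv_sub_ext => k /=; rewrite andbT.
    by apply: HasCard_Equiv (okc_zero h0); apply: Equiv_sub_ext => k /=; case: (k == 0).
  apply: (sub_card (P := fun x => pin x == _) (Q := fun k => (if (sval a == s) && (Z || (k == 0)) then o0 else o1) == o1) Q1).
  case: eqP => [Ea|Na]; last first.
    by apply: HasCard_Equiv (okc_true (A (sval a) v)); apply: Equiv_sub_ext => k /=; rewrite andbT.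
  rewrite Ea; case: Z.
    by apply: HasCard_Equiv (okc_false (A s v)); apply: Equiv_sub_ext => k /=; rewrite andbF.
  by apply: HasCard_Equiv (okc_nz (A s v)); apply: Equiv_sub_ext => k /=; case: (k == 0).
- exact: HasCard_Equiv (fibI3 _ _ _) (fiber_gm _ _).
- apply: (HasCard_Equiv (@fibI4 G v 2 pin i j)).
  have Hp : forall j (e : fiber G v v), (pin (sval e) == j) = (o1 == j).
    move=> j' e; rewrite /pin /= (fiber_gm_prop e) /= [v == s]eq_sym (negbTE hsv) /=; done.
  case: (I2_cases j) => -> /=.
    by apply: (sub_card (P := fun x => pin x == _) (Q := fun _ => o1 == o0) (Hp o0)); exact: okc_false.
  by apply: (sub_card (P := fun x => pin x == _) (Q := fun _ => o1 == o1) (Hp o1)); exact: okc_true.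
Qed.
End ISplit.


Section RBase.
Variables (V : finType) (A : V -> V -> ninf) (u s t : V).
Hypothesis htu : t != u.
Hypothesis hsu : s != u.
Hypothesis hout : forall y, A u y = Some (nat_of_bool (y == t)).
Hypothesis hin : forall x, x != s -> A x u = Some 0.
Let G := gmgraph A.

Definition AR (a b : @Vdel G u) : ninf :=
  addinf (A (sval a) (sval b)) (if sval b == t then A (sval a) u else Some 0).

Lemma rbase (W : finType) (h : @Vdel G u -> W) (A' : W -> W -> ninf) :
  bijective h -> (forall a b, A' (h a) (h b) = AR a b) -> me G (gmgraph A').
Proof.
move=> bh hA.
have hf0 : okc (A (u,t,0).1.1 (u,t,0).1.2) (u,t,0).2 by rewrite /= hout eqxx.
pose f := mkE hf0.
have fu : forall e : gE G, gs e = u -> e = f.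
  move=> [[[x y] k] hk] /= ex; subst x; apply: val_inj => /=.
  have: okc (A u y) k := hk; rewrite hout; case: eqP => // -> /=; clear hk; by case: k.
have hfu : gr f != u by [].
apply: (@me_step _ (@graphR G u s f hsu hfu)).
  right; left; exists u, s, f, hsu, hfu; split.
    move=> [H|H]; first by apply: (H f).
    by apply: H; exists [:: f] => e /fu ->; left.
  split => //; split => //; split => //.
  move=> [[[x y] k] hk] /= ey; subst y; apply/eqP; apply: contraT => hx.
  by move: hk; rewrite /= hin.
apply: (@count_iso (@graphR G u s f hsu hfu) W A' h bh) => a b.
rewrite hA.
have -> : AR a b = addinf (A (sval a) (sval b)) (if (s == sval a) && (t == sval b) then A s u else Some 0).
  rewrite /AR [t == _]eq_sym; case: eqP => [Eb|Nb]; rewrite ?andbT ?andbF //.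
  by case: eqP => [<-|Na] //; rewrite hin //; apply/eqP => E; apply: Na.
apply: (HasCard_Equiv (@fibR G u s f hsu hfu a b)).
apply: HasCard_sum; first exact: fiber_gm.
apply: (@cardR2 G u s _ ((s == sval a) && (gr f == sval b))).
  move=> [[[x y] k] hk] /= ey; subst y; apply/eqP; apply: contraT => hx.
  by move: hk; rewrite /= hin.
exact: fiber_gm.
Qed.
End RBase.

Section Iota.
Variables (V : finType) (A : V -> V -> ninf) (v : V) (A1 : @Vsplit (gmgraph A) v 2 -> @Vsplit (gmgraph A) v 2 -> ninf).
Let G1 := gmgraph A1.

Definition iotaV (x : @Vdel G1 (inr o0)) : V := match sval x with inl w => sval w | inr _ => v end.

Lemma iota_cases (x : @Vdel G1 (inr o0)) :
  (exists w : @Vdel (gmgraph A) v, sval x = inl w /\ iotaV x = sval w) \/ (sval x = inr o1 /\ iotaV x = v).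
Proof.
rewrite /iotaV; case: x => [[w|i] hx] /=; first by left; exists w.
right; split => //; case: (I2_cases i) hx => -> //; by rewrite eqxx.
Qed.

Lemma iota_bij : bijective iotaV.
Proof.
apply: bij_is.
  move=> x y; case: (iota_cases x) => [[w [Ex ->]]|[Ex ->]]; case: (iota_cases y) => [[w' [Ey ->]]|[Ey ->]].
  - by move=> E; apply: val_inj; change (sval x = sval y); rewrite Ex Ey; congr inl; apply: val_inj.
  - by move=> E; have := svalP w; rewrite E eqxx.
  - by move=> E; have := svalP w'; rewrite -E eqxx.
  - by move=> _; apply: val_inj; change (sval x = sval y); rewrite Ex Ey.
move=> y; case: (boolP (y == v)) => [/eqP ->|hy].
  have h : (inr o1 : @Vsplit (gmgraph A) v 2) != inr o0 by [].
  by exists (exist (fun w : gV G1 => w != inr o0) _ h).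
have h : (inl (exist _ y hy) : @Vsplit (gmgraph A) v 2) != inr o0 by [].
by exists (exist (fun w : gV G1 => w != inr o0) _ h); rewrite /iotaV /=.
Qed.
End Iota.


Lemma In_mem (T : eqType) (x : T) s : x \in s -> List.In x s.
Proof. elim: s => //= a s IH; rewrite in_cons => /orP [/eqP ->|/IH]; [by left|by right]. Qed.

Lemma addinf0r x : addinf x (Some 0) = x. Proof. by case: x => [x|] //=; rewrite addn0. Qed.
Lemma addinf0l x : addinf (Some 0) x = x. Proof. by case: x. Qed.
Lemma addinfC x y : addinf x y = addinf y x. Proof. by case: x => [x|]; case: y => [y|] //=; rewrite addnC. Qed.
Lemma addinfA x y z : addinf x (addinf y z) = addinf (addinf x y) z.
Proof. by case: x => [x|]; case: y => [y|]; case: z => [z|] //=; rewrite addnA. Qed.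

Ltac neqx := match goal with H : is_true (?a != ?a) |- _ => by rewrite eqxx in H end.
Ltac crush := repeat (first [ neqx | progress (rewrite ?eqxx ?andbT ?andbF ?addinf0r ?addinf0l /=) | match goal with |- context [?a == ?b] => case: (a =P b) => [?|?]; subst end ]); try done.

Lemma gm_regular (V : finType) (A : V -> V -> ninf) u (d : V -> nat) :
  (forall y, A u y = Some (d y)) -> (exists y, 0 < d y) -> regular (G := gmgraph A) u.
Proof.
move=> hd [y hy] [Hs|Hi].
  have h : okc (A (u,y,0).1.1 (u,y,0).1.2) (u,y,0).2 by rewrite /= hd.
  exact: (Hs (mkE h)).
apply: Hi.
exists (pmap insub [seq (u, y, k) | y <- enum V, k <- iota 0 (d y)]).
move=> [[[x y'] k] hk] /= ex; subst x.
have hk' : okc (A u y') k := hk; rewrite /= hd in hk'.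
apply: In_mem; rewrite mem_pmap_sub /=.
apply: (@allpairs_f_dep _ (fun _ => nat) _ (fun y k => (u, y, k))); first by rewrite mem_enum.
by rewrite mem_iota /= add0n.
Qed.

Definition redir (V : finType) (A : V -> V -> ninf) (u t s1 : V) (x y : V) : ninf :=
  if (x == s1) && (y == u) then Some 0
  else if (x == s1) && (y == t) then addinf (A s1 t) (A s1 u) else A x y.

Lemma redirect (V : finType) (A : V -> V -> ninf) (u t s1 s2 : V) :
  t != u -> (forall y, A u y = Some (nat_of_bool (y == t))) -> s1 != s2 ->
  A s1 u != Some 0 -> A s2 u != Some 0 -> me (gmgraph A) (gmgraph (redir A u t s1)).
Proof.
move=> htu hout h12 h1 h2.
have hs1u : s1 != u by apply: contraNneq h1 => ->; rewrite hout [u == t]eq_sym (negbTE htu).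
have hs2u : s2 != u by apply: contraNneq h2 => ->; rewrite hout [u == t]eq_sym (negbTE htu).
have hreg : regular (G := gmgraph A) u.
  by apply: (gm_regular (d := fun y => nat_of_bool (y == t))) => //; exists t; rewrite eqxx.
have e2ok : okc (A (s2,u,0).1.1 (s2,u,0).1.2) (s2,u,0).2 by case: (A s2 u) h2 => [[|?]|].
apply: me_trans (isplit (Z := true) hs1u (elimN eqP h1) hreg _) _.
  by exists (mkE e2ok); rewrite /pin /= eq_sym (negbTE h12).
set A1 := AI s1 true.
pose s1' : @Vsplit (gmgraph A) u 2 := inl (exist _ s1 hs1u).
pose t' : @Vsplit (gmgraph A) u 2 := inl (exist _ t htu).
have htu' : t' != inr o0 by [].
have hsu' : s1' != inr o0 by [].
have hout' : forall y, A1 (inr o0) y = Some (nat_of_bool (y == t')).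
  case=> [b|j] /=; first by rewrite hout.
  by case: ifP => // _; rewrite hout [u == t]eq_sym (negbTE htu).
have hin' : forall x, x != s1' -> A1 x (inr o0) = Some 0.
  case=> [a|i] //= ha; rewrite /A1 /AI /=.
  case: eqP => // E; case/negP: ha; apply/eqP; congr inl; exact: val_inj.
apply: (rbase htu' hsu' hout' hin' (iota_bij _)) => a b.
case: (iota_cases a) => [[w [Ea ->]]|[Ea ->]]; case: (iota_cases b) => [[w' [Eb ->]]|[Eb ->]];
  rewrite /AR Ea Eb /A1 /AI /redir /= ?eqs /=; clear hin' hout' hsu' htu' s1' t' A1 Ea Eb a b.
- move: (svalP w) (svalP w'); move: (sval w) (sval w') => x y hx hy; rewrite ?hout; crush.
- move: (svalP w); move: (sval w) => x hx; rewrite ?hout; crush.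
- move: (svalP w'); move: (sval w') => y hy; rewrite ?hout; crush.
- rewrite ?hout; crush.
Qed.

Lemma relim_base (V : finType) (A : V -> V -> ninf) (u t : V) :
  t != u -> (forall y, A u y = Some (nat_of_bool (y == t))) ->
  (forall x y, A x u != Some 0 -> A y u != Some 0 -> x = y) ->
  forall (W : finType) (h : @Vdel (gmgraph A) u -> W) (A' : W -> W -> ninf),
  bijective h -> (forall a b, A' (h a) (h b) = AR t a b) -> me (gmgraph A) (gmgraph A').
Proof.
move=> htu hout uniq W h A' bh hA.
have huu : A u u = Some 0 by rewrite hout [u == t]eq_sym (negbTE htu).
case: (pickP (fun x => A x u != Some 0)) => [s hs | none].
  have hsu : s != u by apply: contraNneq hs => ->; rewrite huu.
  apply: (rbase htu hsu hout _ bh hA) => x hx; apply/eqP; apply: contraT => hx'.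
  by case/negP: hx; apply/eqP; apply: uniq.
apply: (rbase htu htu hout _ bh hA) => x _; apply/eqP.
by have := none x; move/negbFE.
Qed.

Lemma relim (V : finType) n : forall (A : V -> V -> ninf) (u t : V),
  #|[set x | A x u != Some 0]| <= n -> t != u -> (forall y, A u y = Some (nat_of_bool (y == t))) ->
  forall (W : finType) (h : @Vdel (gmgraph A) u -> W) (A' : W -> W -> ninf),
  bijective h -> (forall a b, A' (h a) (h b) = AR t a b) -> me (gmgraph A) (gmgraph A').
Proof.
elim: n => [|n IH] A u t hc htu hout W h A' bh hA;
 (case: (boolP [exists x, exists y, (x != y) && (A x u != Some 0) && (A y u != Some 0)]); last first;
  [ move=> hn; apply: (relim_base htu hout _ bh hA) => x y hx hy; apply/eqP; apply: contraT => hxy;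
    case/negP: hn; apply/existsP; exists x; apply/existsP; exists y; by rewrite hxy hx hy | ]).
- move/existsP=> [x /existsP [y /andP [/andP [_ hx] _]]].
  by move: hc; rewrite leqn0 => /eqP/cards0_eq/setP/(_ x); rewrite inE hx in_set0.
have huu : A u u = Some 0 by rewrite hout [u == t]eq_sym (negbTE htu).
move/existsP=> [s1 /existsP [s2 /andP [/andP [h12 h1] h2]]].
have hs1u : s1 != u by apply: contraNneq h1 => ->; rewrite huu.
apply: me_trans (redirect htu hout h12 h1 h2) _.
apply: (IH (redir A u t s1) u t _ htu _ W h A' bh).
- have E : [set x | redir A u t s1 x u != Some 0] = [set x | A x u != Some 0] :\ s1.
    apply/setP => x; rewrite !inE /redir eqxx andbT.
    by case: (x =P s1) => [->|hx] //=.
  rewrite E; move: hc; rewrite (cardsD1 s1) inE h1 add1n ltnS; done.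
- by move=> y; rewrite /redir [u == s1]eq_sym (negbTE hs1u) /= hout.
- move=> a b; rewrite hA /AR /redir; move: (svalP a) (svalP b); move: (sval a) (sval b) => x y hx hy.
  crush.
Qed.



Definition ACe (V : finType) (A : V -> V -> ninf) (w s : V) (a b : @Vdel (gmgraph A) w) : ninf :=
  addinf (A (sval a) (sval b)) (if sval a == s then A w (sval b) else Some 0).

Definition moved (V : finType) (A : V -> V -> ninf) (w s t : V) (x y : V) : ninf :=
  if (x == w) && (y == t) then predinf (A w t)
  else if (x == s) && (y == t) then addinf (A s t) (Some 1) else A x y.

Lemma move1 (V : finType) (A : V -> V -> ninf) (w s t : V) (d : V -> nat) :
  s != w -> (forall x, A x w = Some (nat_of_bool (x == s))) -> (forall y, A w y = Some (d y)) ->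
  0 < d t -> (exists e : gE (gmgraph A), gs e = w /\ sval e != (w, t, 0)) ->
  me (gmgraph A) (gmgraph (moved A w s t)).
Proof.
move=> hsw hin hd ht hother.
have hww : A w w = Some 0 by rewrite hin; case: eqP => // E; move: hsw; rewrite E eqxx.
have dw : d w = 0 by move: (hd w); rewrite hww; case.
have htw : t != w by apply: contraTneq ht => ->; rewrite dw.
have h0 : A w t <> Some 0 by rewrite hd => -[E]; move: ht; rewrite E.
apply: me_trans (osplit htw h0 hother) _.
set A1 := AO t.
pose s' : @Vsplit (gmgraph A) w 2 := inl (exist _ s hsw).
pose t' : @Vsplit (gmgraph A) w 2 := inl (exist _ t htw).
have htu' : t' != inr o0 by [].
have hsu' : s' != inr o0 by [].
have hout' : forall y, A1 (inr o0) y = Some (nat_of_bool (y == t')).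
  by case=> [b|j] /=.
have hin' : forall x, x != s' -> A1 x (inr o0) = Some 0.
  case=> [a|i] //= ha; rewrite /A1 /AO /=; last by case: ifP.
  rewrite hin; case: eqP => // E; case/negP: ha; apply/eqP; congr inl; exact: val_inj.
apply: (rbase htu' hsu' hout' hin' (iota_bij _)) => a b.
case: (iota_cases a) => [[x [Ea ->]]|[Ea ->]]; case: (iota_cases b) => [[y [Eb ->]]|[Eb ->]];
  rewrite /AR Ea Eb /A1 /AO /moved /= ?eqs /=; clear hin' hout' hsu' htu' s' t' A1 Ea Eb a b.
- move: (svalP x) (svalP y); move: (sval x) (sval y) => x' y' hx hy; rewrite ?hin; crush.
- move: (svalP x); move: (sval x) => x' hx; rewrite ?hin; crush.
- move: (svalP y); move: (sval y) => y' hy; rewrite ?hww; crush.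
- rewrite ?hww; crush.
Qed.

Lemma sum_pos_ex (V : finType) (d : V -> nat) : 0 < \sum_y d y -> exists t, 0 < d t.
Proof.
move=> h; apply/existsP; apply: contraTT h => /existsPn H.
rewrite -leqNgt leqn0 (eq_bigr (fun _ => 0)) ?big1_eq // => y _; apply/eqP; rewrite -leqn0 leqNgt; exact: H.
Qed.

Lemma sum_pos_ex_sub (V : finType) (P : pred V) (d : V -> nat) : 0 < \sum_(y | P y) d y -> exists t, P t /\ 0 < d t.
Proof.
move=> h; case: (boolP [exists y, P y && (0 < d y)]) => [/existsP [y /andP [??]]|/existsPn H]; first by exists y.
move: h; rewrite big1 // => y Py; move: (H y); by rewrite Py /= -leqNgt leqn0 => /eqP.
Qed.

Lemma celim (V : finType) n : forall (A : V -> V -> ninf) (w s : V) (d : V -> nat),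
  \sum_y d y <= n -> 0 < \sum_y d y -> s != w ->
  (forall x, A x w = Some (nat_of_bool (x == s))) -> (forall y, A w y = Some (d y)) ->
  forall (W : finType) (h : @Vdel (gmgraph A) w -> W) (A' : W -> W -> ninf),
  bijective h -> (forall a b, A' (h a) (h b) = ACe s a b) -> me (gmgraph A) (gmgraph A').
Proof.
elim: n => [|n IH] A w s d hn hp hsw hin hd W h A' bh hA; first by move: hn hp; rewrite leqn0 => /eqP ->.
have hww : A w w = Some 0 by rewrite hin; case: eqP => // E; move: hsw; rewrite E eqxx.
have dw : d w = 0 by move: (hd w); rewrite hww; case.
case: (sum_pos_ex hp) => t ht.
have htw : t != w by apply: contraTneq ht => ->; rewrite dw.
have Esum : \sum_y d y = d t + \sum_(y | y != t) d y by rewrite (bigD1 t).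
case: (leqP (\sum_y d y) 1) => hs1.
  have dt1 : d t = 1 by lia.
  have drest : forall y, y != t -> d y = 0.
    move=> y hy; have : \sum_(z | z != t) d z = 0 by lia.
    rewrite (bigD1 y) //=; lia.
  have hout : forall y, A w y = Some (nat_of_bool (y == t)).
    by move=> y; rewrite hd; case: eqP => [->|/eqP hy]; [rewrite dt1|rewrite drest].
  have hin' : forall x, x != s -> A x w = Some 0 by move=> x hx; rewrite hin (negbTE hx).
  apply: (rbase htw hsw hout hin' bh) => a b; rewrite hA /ACe /AR.
  move: (svalP a) (svalP b); move: (sval a) (sval b) => x y hx hy; rewrite ?hout ?hin; crush.
have hother : exists e : gE (gmgraph A), gs e = w /\ sval e != (w, t, 0).
  case: (leqP 2 (d t)) => h2.
    have ok : okc (A (w,t,1).1.1 (w,t,1).1.2) (w,t,1).2 by rewrite /= hd.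
    by exists (mkE ok); split => //; rewrite /= !eqs !eqxx.
  have : 0 < \sum_(y | y != t) d y by lia.
  move/sum_pos_ex_sub => [t' [ht' hdt']].
  have ok : okc (A (w,t',0).1.1 (w,t',0).1.2) (w,t',0).2 by rewrite /= hd.
  by exists (mkE ok); split => //=; rewrite !eqs (negbTE ht') andbF.
apply: me_trans (move1 hsw hin hd ht hother) _.
pose d' y := if y == t then (d t).-1 else d y.
have Esum' : \sum_y d' y = (d t).-1 + \sum_(y | y != t) d y.
  rewrite (bigD1 t) //= /d' eqxx; congr addn; apply: eq_bigr => y /negbTE -> //.
apply: (IH (moved A w s t) w s d' _ _ hsw _ _ W h A' bh).
- rewrite Esum'; lia.
- rewrite Esum'; lia.
- by move=> x; rewrite /moved [w == t]eq_sym (negbTE htw) !andbF hin.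
- move=> y; rewrite /moved /d' eqxx /= [w == s]eq_sym (negbTE hsw) /=.
  by case: (y =P t) => [_|_]; rewrite hd.
- move=> a b; rewrite hA /ACe /moved; move: (svalP a) (svalP b); move: (sval a) (sval b) => x y hx hy.
  rewrite ?hd; crush.
  by case: (A s t) => //= ?; congr Some; lia.
Qed.



Definition Acol (V : finType) (A : V -> V -> ninf) (u t : V) (x y : V) : ninf :=
  if y == t then addinf (if x == u then predinf (A u t) else A x t) (A x u) else A x y.

Lemma colbasic (V : finType) (A : V -> V -> ninf) (u t : V) :
  t != u -> A u t <> Some 0 -> A u u <> Some 0 -> me (gmgraph A) (gmgraph (Acol A u t)).
Proof.
move=> htu h0 hl.
have hother : exists e : gE (gmgraph A), gs e = u /\ sval e != (u, t, 0).
  have ok : okc (A (u,u,0).1.1 (u,u,0).1.2) (u,u,0).2 by move: hl => /=; case: (A u u) => [[|?]|].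
  by exists (mkE ok); split => //; rewrite /= !eqs eq_sym (negbTE htu) andbF.
apply: me_trans (osplit htu h0 hother) _.
set A1 := AO t.
pose t' : @Vsplit (gmgraph A) u 2 := inl (exist _ t htu).
have htu' : t' != inr o0 by [].
have hout' : forall y, A1 (inr o0) y = Some (nat_of_bool (y == t')) by case=> [b|j] /=.
apply: (relim (leqnn _) htu' hout' (iota_bij _)) => a b.
case: (iota_cases a) => [[x [Ea ->]]|[Ea ->]]; case: (iota_cases b) => [[y [Eb ->]]|[Eb ->]];
  rewrite /AR Ea Eb /A1 /AO /Acol /= ?eqs /=; clear hout' htu' t' A1 Ea Eb a b.
- move: (svalP x) (svalP y); move: (sval x) (sval y) => x' y' hx hy; crush.
- move: (svalP x); move: (sval x) => x' hx; crush.
- move: (svalP y); move: (sval y) => y' hy; crush.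
- crush.
Qed.

Definition Arow (V : finType) (A : V -> V -> ninf) (i i' : V) (x y : V) : ninf :=
  if x == i' then addinf (if y == i then predinf (A i' i) else A i' y) (A i y) else A x y.

Lemma rowbasic (V : finType) (A : V -> V -> ninf) (i i' : V) (d : V -> nat) :
  i' != i -> A i' i <> Some 0 -> (forall y, A i y = Some (d y)) -> 0 < d i ->
  me (gmgraph A) (gmgraph (Arow A i i')).
Proof.
move=> hii h0 hd hdi.
have hreg : regular (G := gmgraph A) i by apply: (gm_regular hd); exists i.
have hother : exists e : gE (gmgraph A), gr e = i /\ pin i' false e = o1.
  have ok : okc (A (i,i,0).1.1 (i,i,0).1.2) (i,i,0).2 by rewrite /= hd.
  by exists (mkE ok); split => //; rewrite /pin /= eq_sym (negbTE hii).
apply: me_trans (isplit hii h0 hreg hother) _.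
set A1 := AI i' false.
pose s' : @Vsplit (gmgraph A) i 2 := inl (exist _ i' hii).
have hsu' : s' != inr o0 by [].
pose d1 (x : @Vsplit (gmgraph A) i 2) : nat := match x with inl b => d (sval b) | inr j => if j == o0 then 0 else d i end.
have hd1 : forall y, A1 (inr o0) y = Some (d1 y).
  by case=> [b|j] /=; [rewrite /A1 /AI hd | rewrite /A1 /AI; case: ifP => //; rewrite hd].
have hin1 : forall x, A1 x (inr o0) = Some (nat_of_bool (x == s')).
  case=> [a|j] //=; rewrite /A1 /AI /=.
  case: eqP => [E|N].
    have -> : inl a == s' by apply/eqP; congr inl; exact: val_inj.
    done.
  have -> : (inl a == s') = false.
    apply/negbTE/negP; rewrite /s' => /eqP [E]; apply: N; by rewrite E.
  done.
have hp : 0 < \sum_y d1 y by rewrite (bigD1 (inr o1)) //= ltn_addr.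
apply: (celim (leqnn _) hp hsu' hin1 hd1 (iota_bij _)) => a b.
case: (iota_cases a) => [[x [Ea ->]]|[Ea ->]]; case: (iota_cases b) => [[y [Eb ->]]|[Eb ->]];
  rewrite /ACe Ea Eb /A1 /AI /Arow /= ?eqs /=; clear hd1 hin1 hp hsu' s' A1 Ea Eb a b.
- move: (svalP x) (svalP y); move: (sval x) (sval y) => x' y' hx hy; crush.
- move: (svalP x); move: (sval x) => x' hx; crush.
- move: (svalP y); move: (sval y) => y' hy; crush.
- crush.
Qed.


Section Mat.
Variables (n m : nat).
Definition FM (M : 'I_n -> 'I_n -> nat) (x y : 'I_n) : ninf :=
  if x < m then Some (nat_of_bool (x == y) + M x y) else None.
Definition EE (M1 M2 : 'I_n -> 'I_n -> nat) := me (gmgraph (FM M1)) (gmgraph (FM M2)).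
Definition colM (M : 'I_n -> 'I_n -> nat) (u t : 'I_n) (x y : 'I_n) : nat := M x y + (y == t) * M x u.
Definition rowM (M : 'I_n -> 'I_n -> nat) (i i' : 'I_n) (x y : 'I_n) : nat := M x y + (x == i') * M i y.

Lemma E_col (M : 'I_n -> 'I_n -> nat) (u t : 'I_n) : u != t -> (m <= u \/ 0 < M u t) -> EE M (colM M u t).
Proof.
move=> hut h.
have h0 : FM M u t <> Some 0.
  rewrite /FM; case: ifP => // hu; case: h => [h|h]; first by move: h; rewrite leqNgt hu.
  by rewrite (negbTE hut) add0n => -[E]; move: h; rewrite E.
have hl : FM M u u <> Some 0 by rewrite /FM; case: ifP => // _; rewrite eqxx.
rewrite /EE; have -> : FM (colM M u t) = Acol (FM M) u t.
  apply: functional_extensionality => x; apply: functional_extensionality => y.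
  rewrite /FM /colM /Acol; case: (y =P t) => [->|hy] /=; last by rewrite mul0n addn0; case: ifP.
  rewrite mul1n; case: (x =P u) => [->|hx].
    case: ifP => hu //=; congr Some; rewrite (negbTE hut) /=.
    case: h => [h|h]; first by move: h; rewrite leqNgt hu.
    lia.
  case: ifP => //= _; congr Some; lia.
by apply: colbasic => //; rewrite eq_sym.
Qed.

Lemma E_row (M : 'I_n -> 'I_n -> nat) (i i' : 'I_n) : i' != i -> i < m -> i' < m -> 0 < M i' i -> EE M (rowM M i i').
Proof.
move=> hii hi hi' hp.
have h0 : FM M i' i <> Some 0 by rewrite /FM hi' (negbTE hii) add0n => -[E]; move: hp; rewrite E.
have hd : forall y, FM M i y = Some (nat_of_bool (i == y) + M i y) by move=> y; rewrite /FM hi.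
rewrite /EE; have -> : FM (rowM M i i') = Arow (FM M) i i'.
  apply: functional_extensionality => x; apply: functional_extensionality => y.
  rewrite /FM /rowM /Arow; case: (x =P i') => [->|hx] /=; last by rewrite mul0n addn0.
  rewrite mul1n hi' hi; case: (y =P i) => [->|hy] /=.
    congr Some; rewrite (negbTE hii) eqxx /=; lia.
  have /negbTE -> : i != y by apply/eqP => E; apply: hy; rewrite E.
  congr Some; rewrite /=; lia.
apply: (rowbasic hii h0 hd); by rewrite eqxx.
Qed.

Lemma EE_refl M : EE M M. Proof. exact: me_refl. Qed.
Lemma EE_sym M1 M2 : EE M1 M2 -> EE M2 M1. Proof. exact: me_sym. Qed.
Lemma EE_trans M1 M2 M3 : EE M1 M2 -> EE M2 M3 -> EE M1 M3. Proof. exact: me_trans. Qed.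
End Mat.


Lemma nesym' (T : eqType) (a b : T) : a != b -> b != a. Proof. by rewrite eq_sym. Qed.

Section Paths.
Variables (n m : nat) (B : 'I_n -> 'I_n -> nat).
Definition geM (M : 'I_n -> 'I_n -> nat) := forall x y, B x y <= M x y.

Lemma geM_col M u t : geM M -> geM (colM M u t).
Proof. by move=> h x y; rewrite /colM; apply: leq_trans (h x y) (leq_addr _ _). Qed.
Lemma geM_row M i i' : geM M -> geM (rowM M i i').
Proof. by move=> h x y; rewrite /rowM; apply: leq_trans (h x y) (leq_addr _ _). Qed.

Lemma edgeB a b : a != b -> (exists e : gE (gmgraph (FM m B)), gs e = a /\ gr e = b) -> m <= a \/ 0 < B a b.
Proof.
move=> hab [[[[x y] k] hk] [/= ex ey]]; subst x y; move: hk; rewrite /FM /=.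
case: ifP => ha; last by left; rewrite leqNgt ha.
by rewrite (negbTE hab) add0n /= => hk; right; lia.
Qed.

Lemma col_path (j' k : 'I_n) : reach (G := gmgraph (FM m B)) k j' ->
  k != j' -> forall M, geM M -> EE m M (colM M k j').
Proof.
move=> hr; move: (clos_rt_rt1n _ _ _ _ hr) => {hr}; elim=> [x|x k1 z hx _ IH]; first by rewrite eqxx.
move=> hxz M hM.
case: (x =P k1) => [E|hxk1]; first by subst; exact: IH.
have hedge : forall M, geM M -> m <= x \/ 0 < M x k1.
  move=> M' hM'; case: (edgeB (introN eqP hxk1) hx) => [h|h]; [by left|right].
  exact: leq_trans h (hM' _ _).
case: (k1 =P z) => [E|hk1z].
  subst; apply: E_col => //; case: (edgeB (introN eqP hxk1) hx) => [h|h]; [by left|right].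
  exact: leq_trans h (hM _ _).
have hk1z' := introN eqP hk1z.
pose M1 := colM M x k1; pose M4 := colM M x z; pose M3 := colM M4 k1 z.
have E2 : colM M1 k1 z = colM M3 x k1.
  apply: functional_extensionality => a; apply: functional_extensionality => b.
  rewrite /M3 /M4 /M1 /colM eqxx (negbTE hxz) (negbTE hk1z'); lia.
apply: EE_trans (E_col (introN eqP hxk1) (hedge _ hM)) _.
apply: EE_trans (IH hk1z' _ (geM_col _ _ hM)) _.
rewrite E2.
apply: EE_trans (EE_sym (E_col (introN eqP hxk1) (hedge _ (geM_col _ _ (geM_col _ _ hM))))) _.
exact: EE_sym (IH hk1z' _ (geM_col _ _ hM)).
Qed.

Definition Rtl (a b : 'I_n) : Prop := (a < m) && (b < m) && ((a == b) || (0 < B a b)).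

Lemma row_path (i u : 'I_n) : clos_refl_trans_1n _ Rtl u i ->
  u != i -> u < m -> i < m -> forall M, geM M -> EE m M (rowM M i u).
Proof.
elim=> [x|x k1 z hx _ IH]; first by rewrite eqxx.
move=> hxz hxm hzm M hM.
move/andP: hx => [/andP [_ hk1m] hx].
case: (x =P k1) => [E|hxk1]; first by subst; exact: IH.
have hxk1' := introN eqP hxk1.
have hp : forall M, geM M -> 0 < M x k1.
  by move=> M' hM'; move: hx; rewrite (negbTE hxk1') /= => h; exact: leq_trans h (hM' _ _).
case: (k1 =P z) => [E|hk1z].
  by subst; apply: E_row => //; exact: hp.
have hk1z' := introN eqP hk1z.
pose M1 := rowM M z k1; pose M4 := rowM M z x; pose M3 := rowM M4 k1 x.
have E2 : rowM M1 k1 x = rowM M3 z k1.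
  apply: functional_extensionality => a; apply: functional_extensionality => b.
  rewrite /M3 /M4 /M1 /rowM eqxx [z == x]eq_sym (negbTE hxz) [k1 == x]eq_sym (negbTE hxk1'); lia.
apply: EE_trans (IH hk1z' hk1m hzm _ hM) _.
apply: EE_trans (E_row hxk1' hk1m hxm (hp _ (geM_row _ _ hM))) _.
rewrite E2.
apply: EE_trans (EE_sym (IH hk1z' hk1m hzm _ (geM_row _ _ (geM_row _ _ hM)))) _.
exact: EE_sym (E_row hxk1' hk1m hxm (hp _ (geM_row _ _ hM))).
Qed.
End Paths.


Lemma mg_eq (n m : nat) (B : 'M[nat]_n) :
  mgraph (mxaddinf (J_nm n m) (mxinf B)) = gmgraph (FM m (fun x y => B x y)).
Proof.
have E : (fun x y => mxaddinf (J_nm n m) (mxinf B) x y) = FM m (fun x y => B x y).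
  apply: functional_extensionality => x; apply: functional_extensionality => y.
  by rewrite /mxaddinf /mxinf /J_nm !mxE /FM; case: ifP.
change (gmgraph (fun x y => mxaddinf (J_nm n m) (mxinf B) x y) = gmgraph (FM m (fun x y => B x y))).
by rewrite E.
Qed.

Lemma tl_path (n m : nat) (hmn : m <= n) (B : 'M[nat]_n) (a b : 'I_m) :
  reach (G := mgraph (topleft hmn (mxaddinf (J_nm n m) (mxinf B)))) a b ->
  clos_refl_trans_1n _ (Rtl m (fun x y => B x y)) (widen_ord hmn a) (widen_ord hmn b).
Proof.
move=> hr; move: (clos_rt_rt1n _ _ _ _ hr) => {hr}; elim=> [x|x y z hx _ IH]; first exact: rt1n_refl.
refine (Relation_Operators.rt1n_trans _ _ _ _ _ _ IH).
case: hx => [[[[x' y'] k] hk] [/= ex ey]]; subst x' y'.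
move: hk; rewrite /edge_ok /= /topleft /mxaddinf /mxinf /J_nm !mxE /= (ltn_ord x) /= => hk.
rewrite /Rtl /= !ltn_ord /=; apply/orP.
case: (x =P y) => [->|hxy]; first by left.
right; move: hk; have -> : (widen_ord hmn x == widen_ord hmn y) = false.
  by apply/negbTE/eqP => -[E]; apply: hxy; apply: val_inj.
rewrite /= add0n; lia.
Qed.

Theorem proposition7p3 (n m : nat) (hmn : (m <= n)%N) (B B' : 'M[nat]_n) :
  (forall i j : 'I_n, (m <= i)%N -> B i j = 0%N) ->
  irreducible (mxaddinf (J_nm n m) (mxinf B)) ->
  irreducible (topleft hmn (mxaddinf (J_nm n m) (mxinf B))) ->
  ((exists j j' : 'I_n, j != j' /\
       B' = (\matrix_(x, y) (B x y + (y == j') * B x j)%N)%R) \/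
   (exists i i' : 'I_n, i != i' /\ (exists y, B i y != 0%N) /\ (exists y, B i' y != 0%N) /\
       B' = (\matrix_(x, y) (B x y + (x == i') * B i y)%N)%R)) ->
  mx_move_equiv (mxaddinf (J_nm n m) (mxinf B)) (mxaddinf (J_nm n m) (mxinf B')).
Proof.
move=> hz hirr htl hc.
rewrite /mx_move_equiv !mg_eq.
have geB : geM (fun x y => B x y) (fun x y => B x y) by [].
case: hc => [[j [j' [hjj ->]]]|[i [i' [hii [[y hy] [[y' hy'] ->]]]]]].
- have -> : (fun x y => ((\matrix_(x, y) (B x y + (y == j') * B x j)%N)%R : 'M[nat]_n) x y) = colM (fun x y => B x y) j j'.
    by apply: functional_extensionality => x; apply: functional_extensionality => z; rewrite mxE.
  apply: (col_path (B := fun x y => B x y)) => //.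
  by move: hirr; rewrite /irreducible mg_eq => hirr; exact: hirr.
- have -> : (fun x y => ((\matrix_(x, y) (B x y + (x == i') * B i y)%N)%R : 'M[nat]_n) x y) = rowM (fun x y => B x y) i i'.
    by apply: functional_extensionality => x; apply: functional_extensionality => z; rewrite mxE.
  have him : i < m by rewrite ltnNge; apply/negP => h; move: hy; rewrite hz.
  have him' : i' < m by rewrite ltnNge; apply/negP => h; move: hy'; rewrite hz.
  have := tl_path (htl (Ordinal him') (Ordinal him)).
  have -> : widen_ord hmn (Ordinal him') = i' by apply: val_inj.
  have -> : widen_ord hmn (Ordinal him) = i by apply: val_inj.
  move=> hp; apply: (row_path hp) => //; by rewrite eq_sym.
Qed.
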